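(* Let $p$ be a prime, $G$ an abelian $p$-group having a direct summand of the form $X = Y \oplus Z$, and $n$ a positive integer. Suppose either (a) $Y \cong \mathbb{Z}_{p^n}$ and $Z$ is the direct sum of infinitely many copies of $\mathbb{Z}_{p^m}$, where either $n+2 \le m < \omega$ or $m = \infty$; or (b) $Y$ is the direct sum of infinitely many copies of $\mathbb{Z}_{p^n}$ and $Z \cong \mathbb{Z}_{p^\infty}$. Then $G$ is not semi-generalized Bassian.
   Context: All groups are additively written abelian groups; $\mathbb{Z}_{p^k}$ is the cyclic group of order $p^k$ and $\mathbb{Z}_{p^\infty}$ is the quasicyclic (Prüfer) $p$-group. A subgroup $H$ of a group $A$ is essential in $A$ if $H \cap S \neq \{0\}$ for every non-zero subgroup $S$ of $A$. A group $G$ is semi-generalized Bassian if, for every subgroup $H \le G$, the existence of an injective homomorphism $G \to G/H$ implies that $H$ is an essential subgroup of some direct summand of $G$. *)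

(* Defs.v *)
(* Abelian groups = zmodType; subgroups = predicates G -> Prop. *)
From mathcomp Require Import all_boot all_algebra.
Set Implicit Arguments. Unset Strict Implicit. Unset Printing Implicit Defensive.
Import GRing.Theory.
Local Open Scope ring_scope.

Section Defs.
Variable G : zmodType.

Definition subgroup (S : G -> Prop) : Prop :=
  S 0 /\ forall x y, S x -> S y -> S (x - y).

Definition internal_sum2 (Y Z X : G -> Prop) : Prop :=
  subgroup Y /\ subgroup Z /\ (forall x, Y x -> Z x -> x = 0) /\
  (forall x, X x <-> exists y z, Y y /\ Z z /\ x = y + z).

Definition direct_summand (K : G -> Prop) : Prop :=
  exists L : G -> Prop, internal_sum2 K L (fun _ => True).

Definition essential (H K : G -> Prop) : Prop :=
  (forall x, H x -> K x) /\
  forall S : G -> Prop, subgroup S -> (forall x, S x -> K x) ->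
    (exists x, S x /\ x <> 0) -> exists x, H x /\ S x /\ x <> 0.

(* An injective homomorphism G -> G/H, given through a choice of coset
   representatives f : G -> G  (x |-> f x + H). *)
Definition inj_hom_to_quotient (H : G -> Prop) (f : G -> G) : Prop :=
  (forall x y, H (f (x + y) - (f x + f y))) /\
  (forall x, H (f x) -> x = 0).

Definition semi_generalized_Bassian : Prop :=
  forall H : G -> Prop, subgroup H ->
    (exists f : G -> G, inj_hom_to_quotient H f) ->
    exists K : G -> Prop, direct_summand K /\ essential H K.

Definition p_group (p : nat) : Prop :=
  forall x : G, exists k : nat, x *+ (p ^ k) = 0.

Definition elt_order (x : G) (N : nat) : Prop :=
  (0 < N)%N /\ x *+ N = 0 /\ forall k, (0 < k < N)%N -> x *+ k <> 0.

Definition cyclic_of_order (C : G -> Prop) (N : nat) : Prop :=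
  exists c : G, elt_order c N /\ forall x, C x <-> exists k : nat, x = c *+ k.

(* C is isomorphic to the Pruefer group Z_{p^oo}: generated by c_1, c_2, ...
   with p c_1 = 0 (c_1 <> 0) and p c_{k+1} = c_k. *)
Definition pruefer (p : nat) (C : G -> Prop) : Prop :=
  exists c : nat -> G, c 0%N = 0 /\ c 1%N <> 0 /\
    (forall k, c k.+1 *+ p = c k) /\
    forall x, C x <-> exists k j : nat, x = c k *+ j.

Definition internal_dsum (I : eqType) (C : I -> G -> Prop) (Z : G -> Prop) : Prop :=
  (forall i, subgroup (C i)) /\
  (forall x, Z x <-> exists (s : seq I) (g : I -> G),
       (forall i, C i (g i)) /\ x = \sum_(i <- s) g i) /\
  (forall (s : seq I) (g : I -> G), uniq s -> (forall i, C i (g i)) ->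
       \sum_(i <- s) g i = 0 -> forall i, i \in s -> g i = 0).

End Defs.

Definition infinite_type (I : Type) : Prop :=
  exists f : nat -> I, injective f.

Definition inf_dsum_of (G : zmodType) (P : (G -> Prop) -> Prop) (Z : G -> Prop) : Prop :=
  exists (I : eqType) (C : I -> G -> Prop),
    infinite_type I /\ internal_dsum C Z /\ forall i, P (C i).

(* Main.v *)
Require Import Defs.
From mathcomp Require Import all_boot all_algebra.
From Stdlib Require Import ClassicalEpsilon.
Set Implicit Arguments. Unset Strict Implicit. Unset Printing Implicit Defensive.
Import GRing.Theory.

Section Aux.
Local Open Scope ring_scope.
Variable G : zmodType.
Implicit Types (x y z : G) (S : G -> Prop).

Lemma sg0 S : subgroup S -> S 0. Proof. by case. Qed.
Lemma sgB S x y : subgroup S -> S x -> S y -> S (x - y). Proof. by case=> _ H; apply: H. Qed.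
Lemma sgN S x : subgroup S -> S x -> S (- x).
Proof. move=> hS hx; rewrite -sub0r; apply: sgB => //; exact: sg0. Qed.
Lemma sgD S x y : subgroup S -> S x -> S y -> S (x + y).
Proof. move=> hS hx hy; rewrite -[y]opprK; apply: sgB => //; exact: sgN. Qed.
Lemma sgMn S x k : subgroup S -> S x -> S (x *+ k).
Proof.
move=> hS hx; elim: k => [|k IH]; first by rewrite mulr0n; exact: sg0.
by rewrite mulrS; apply: sgD.
Qed.
Lemma sgsum S (I : Type) (s : seq I) (F : I -> G) :
  subgroup S -> (forall i, S (F i)) -> S (\sum_(i <- s) F i).
Proof.
move=> hS hF; elim: s => [|i s IH]; first by rewrite big_nil; exact: sg0.
by rewrite big_cons; apply: sgD.
Qed.

Lemma mulrn_mod x N u : x *+ N = 0 -> x *+ u = x *+ (u %% N).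
Proof. by move=> hN; rewrite {1}(divn_eq u N) mulrnDr mulrnA mulrnAC hN mul0rn add0r. Qed.

Lemma mulrn_dvd0 x N w : x *+ N = 0 -> (N %| w)%N -> x *+ w = 0.
Proof. by move=> hN /dvdnP[q ->]; rewrite mulrnA mulrnAC hN mul0rn. Qed.

Lemma mulrn_gcd x a b : x *+ a = 0 -> x *+ b = 0 -> x *+ gcdn a b = 0.
Proof.
elim: a {-2}a (leqnn a) b => [|N IH] a; first by rewrite leqn0 => /eqP-> b _ hb; rewrite gcd0n.
move=> ha b hxa hxb; case: (posnP a) => [->|a0]; first by rewrite gcd0n.
rewrite gcdnE (negbTE (lt0n_neq0 a0)); apply: IH => //.
  by rewrite -ltnS (leq_trans (ltn_pmod b a0) ha).
by rewrite -(mulrn_mod _ hxa).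
Qed.

Lemma mulrn_eqmod x N u v : x *+ N = 0 -> (forall w, x *+ w = 0 -> (N %| w)%N) ->
  (x *+ u = x *+ v <-> u = v %[mod N]).
Proof.
move=> hN hd.
wlog huv : u v / (u <= v)%N.
  move=> W; case: (leqP u v) => [/W//|/ltnW/W [h1 h2]]; split=> h.
    by apply/esym/h1/esym.
  by apply/esym/h2/esym.
rewrite -(subnKC huv) mulrnDr; split.
  move=> h; have /hd h0 : x *+ (v - u) = 0 by apply: (addrI (x *+ u)); rewrite addr0 -h.
  by apply/eqP; rewrite eq_sym eqn_mod_dvd ?leq_addr // addKn.
move/eqP; rewrite eq_sym eqn_mod_dvd ?leq_addr // addKn => h.
by rewrite (mulrn_dvd0 hN h) addr0.
Qed.


Lemma pg_coprime0 p x i : prime p -> p_group G p -> x *+ i = 0 -> ~~ (p %| i)%N -> x = 0.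
Proof.
move=> pp pg hi npi; have [k hk] := pg x.
have cop : coprime (p ^ k) i by rewrite coprimeXl // prime_coprime.
by have := mulrn_gcd hk hi; rewrite (eqP cop) mulr1n.
Qed.

Lemma exact_pow_dvd p k x u : prime p -> x *+ (p ^ k.+1) = 0 -> x *+ (p ^ k) <> 0 ->
  x *+ u = 0 -> (p ^ k.+1 %| u)%N.
Proof.
move=> pp hk hnk hu; have hg := mulrn_gcd hk hu.
have [m hm em] := elimT (dvdn_pfactor _ _ pp) (dvdn_gcdl (p ^ k.+1) u).
case: (leqP m k) => hmk.
  exfalso; apply: hnk; apply: (mulrn_dvd0 hg); rewrite em dvdn_Pexp2l ?prime_gt1 //.
have emk : m = k.+1 by apply/eqP; rewrite eqn_leq hm hmk.
by rewrite -emk -em dvdn_gcdr.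
Qed.

Section Pr.
Variables (p : nat) (c : nat -> G).
Hypothesis pp : prime p.
Hypothesis c0 : c 0%N = 0.
Hypothesis c1 : c 1%N <> 0.
Hypothesis cS : forall k, c k.+1 *+ p = c k.

Lemma pr_down k j : c (k + j)%N *+ (p ^ j) = c k.
Proof.
elim: j => [|j IH]; first by rewrite addn0 expn0 mulr1n.
by rewrite addnS expnS mulrnA cS IH.
Qed.

Lemma pr_ord k u : c k *+ u = 0 -> (p ^ k %| u)%N.
Proof.
case: k => [|k] hu; first by rewrite expn0 dvd1n.
apply: (exact_pow_dvd pp _ _ hu).
  by have := pr_down 0 k.+1; rewrite add0n => ->.
by have := pr_down 1 k; rewrite add1n => ->.
Qed.

Lemma pr_killed k j : c k *+ j *+ p = 0 -> exists q, c k *+ j = c 1%N *+ q.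
Proof.
case: k => [|k] h; first by exists 0%N; rewrite c0 mul0rn mulr0n.
have := pr_ord (k := k.+1) (u := (j * p)%N); rewrite mulrnA => /(_ h).
rewrite expnS mulnC dvdn_pmul2r ?prime_gt0 // => /dvdnP [q ->].
by exists q; rewrite mulnC mulrnA -[k.+1]add1n pr_down.
Qed.
End Pr.

Definition choose_or (A : Type) (P : A -> Prop) (d : A) : A :=
  match excluded_middle_informative (exists t : A, P t) with
  | left H => proj1_sig (constructive_indefinite_description _ H)
  | right _ => d end.

Lemma choose_orP (A : Type) (P : A -> Prop) (d : A) : (exists t : A, P t) -> P (choose_or P d).
Proof.
rewrite /choose_or => h; case: excluded_middle_informative => // H.
by case: constructive_indefinite_description.
Qed.

Definition span (a : nat -> G) x := exists k j, x = a k *+ j.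

Section Phi.
Variables a b : nat -> G.
Definition geq_ab :=
  (forall k u v, a k *+ u = a k *+ v <-> b k *+ u = b k *+ v) /\
  (forall k K, (k <= K)%N -> exists r, a k = a K *+ r /\ b k = b K *+ r).
Hypothesis E : geq_ab.

Definition phi x := let kj := choose_or (fun kj : nat * nat => x = a kj.1 *+ kj.2) (0,0)%N in
  b kj.1 *+ kj.2.

Lemma lvl k k' : exists K r r', [/\ a k = a K *+ r, b k = b K *+ r, a k' = a K *+ r' & b k' = b K *+ r'].
Proof.
have [r [h1 h2]] := E.2 k (maxn k k') (leq_maxl _ _).
have [r' [h3 h4]] := E.2 k' (maxn k k') (leq_maxr _ _).
by exists (maxn k k'), r, r'.
Qed.

Lemma phi_eq k j : phi (a k *+ j) = b k *+ j.
Proof.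
rewrite /phi.
have := @choose_orP _ (fun kj : nat * nat => a k *+ j = a kj.1 *+ kj.2) (0,0)%N (ex_intro _ (k, j) erefl).
set kj := choose_or _ _.
have [K [r [r' [h1 h2 h3 h4]]]] := lvl k kj.1.
rewrite h1 h3 h2 h4 -!mulrnA => /(E.1 K) ->. done.
Qed.

Lemma phiD x y : span a x -> span a y -> phi (x + y) = phi x + phi y.
Proof.
move=> [k [j ->]] [k' [j' ->]].
have [K [r [r' [h1 h2 h3 h4]]]] := lvl k k'.
by rewrite !phi_eq h1 h2 h3 h4 -!mulrnA -mulrnDr phi_eq mulrnDr.
Qed.

Lemma phiMn x m : span a x -> phi (x *+ m) = phi x *+ m.
Proof. by move=> [k [j ->]]; rewrite -mulrnA !phi_eq mulrnA. Qed.

Lemma phi_span x : span b (phi x).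
Proof. by rewrite /phi; eexists; eexists. Qed.

Lemma phi_inj x : span a x -> phi x = 0 -> x = 0.
Proof.
move=> [k [j ->]]; rewrite phi_eq => h.
have : b k *+ j = b k *+ 0 by rewrite mulr0n.
by move/(E.1 k); rewrite mulr0n.
Qed.
End Phi.

Lemma elt_order_dvd (c : G) N w : elt_order c N -> c *+ w = 0 -> (N %| w)%N.
Proof.
move=> [N0 [hN hk]] hw; rewrite /dvdn; apply/negPn/negP => hne.
apply: (hk (w %% N)%N); first by rewrite lt0n hne ltn_pmod.
by rewrite -(mulrn_mod _ hN).
Qed.

Lemma geq_cyc (c d : G) N : elt_order c N -> elt_order d N -> geq_ab (fun _ => c) (fun _ => d).
Proof.
move=> hc hd; split=> [k u v|k K _]; last by exists 1%N.
rewrite (mulrn_eqmod _ _ hc.2.1 (fun w => @elt_order_dvd c N w hc)).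
by rewrite (mulrn_eqmod _ _ hd.2.1 (fun w => @elt_order_dvd d N w hd)).
Qed.

Lemma geq_pr p (c d : nat -> G) : prime p ->
  c 0%N = 0 -> c 1%N <> 0 -> (forall k, c k.+1 *+ p = c k) ->
  d 0%N = 0 -> d 1%N <> 0 -> (forall k, d k.+1 *+ p = d k) -> geq_ab c d.
Proof.
move=> pp c0 c1 cS d0 d1 dS; split=> [k u v|k K hkK].
  have hc : c k *+ p ^ k = 0 by have := pr_down cS 0 k; rewrite add0n => ->.
  have hd : d k *+ p ^ k = 0 by have := pr_down dS 0 k; rewrite add0n => ->.
  rewrite (mulrn_eqmod _ _ hc (pr_ord pp c0 c1 cS (k:=k))).
  by rewrite (mulrn_eqmod _ _ hd (pr_ord pp d0 d1 dS (k:=k))).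
exists (p ^ (K - k))%N; rewrite -{1}(subnKC hkK) pr_down //.
by rewrite -{1}(subnKC hkK) pr_down.
Qed.


Section Dsum.
Variables (I : eqType) (C : I -> G -> Prop) (Z : G -> Prop).
Hypothesis hD : internal_dsum C Z.

Lemma sum_pick (F : I -> G) (t : seq I) (j : I) : uniq t -> j \in t ->
  \sum_(i <- t) F i *+ (j == i) = F j.
Proof.
move=> ut xt; rewrite (bigD1_seq j) //= eqxx mulr1n big1 ?addr0 //.
by move=> i /negbTE; rewrite eq_sym => ->; rewrite mulr0n.
Qed.

Lemma sum_count (F : I -> G) s t : uniq t -> {subset s <= t} ->
  \sum_(i <- s) F i = \sum_(i <- t) F i *+ count_mem i s.
Proof.
move=> ut; elim: s => [|j s IH] sub.
  by rewrite big_nil big1_seq // => i _; rewrite mulr0n.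
rewrite big_cons IH; last by move=> i hi; apply: sub; rewrite inE hi orbT.
under [RHS]eq_bigr => i _ do rewrite /= mulrnDr.
by rewrite big_split /= sum_pick // sub // inE eqxx.
Qed.

Definition rep z (sg : seq I * (I -> G)) := (forall i, C i (sg.2 i)) /\ z = \sum_(i <- sg.1) sg.2 i.

Lemma Z_rep z : Z z <-> exists sg, rep z sg.
Proof.
rewrite (hD.2.1 z); split=> [[s [g [h1 h2]]]|[[s g] [h1 h2]]]; first by exists (s, g).
by exists s, g.
Qed.

Lemma Csg i : subgroup (C i). Proof. exact: hD.1. Qed.

Lemma rep_norm z s g : rep z (s, g) -> rep z (undup s, fun i => g i *+ count_mem i s).
Proof.
move=> [h1 /= h2]; split=> [i|] /=; first exact: sgMn (Csg i) (h1 i).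
by rewrite h2 (sum_count _ (undup_uniq s)) // => i; rewrite mem_undup.
Qed.

Lemma rep_cmp z s g s' g' : rep z (s, g) -> rep z (s', g') ->
  forall i, i \in undup (s ++ s') -> g i *+ count_mem i s = g' i *+ count_mem i s'.
Proof.
move=> [h1 /= h2] [h1' /= h2'] i hi; apply/eqP; rewrite -subr_eq0; apply/eqP.
apply: (hD.2.2 (undup (s ++ s')) (fun i => g i *+ count_mem i s - g' i *+ count_mem i s')) => //.
- exact: undup_uniq.
- by move=> j; apply: sgB (Csg j) _ _; apply: sgMn (Csg j) _.
have sub1 : {subset s <= undup (s ++ s')} by move=> j hj; rewrite mem_undup mem_cat hj.
have sub2 : {subset s' <= undup (s ++ s')} by move=> j hj; rewrite mem_undup mem_cat hj orbT.
by rewrite sumrB -(sum_count g (undup_uniq _) sub1) -(sum_count g' (undup_uniq _) sub2) -h2 -h2' subrr.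
Qed.

Lemma Z_sub : subgroup Z.
Proof.
split; first by apply/Z_rep; exists ([::], fun _ => 0); split=> [i|]; [exact: sg0 (Csg i)| rewrite big_nil].
move=> x y /Z_rep [[s g] hx] /Z_rep [[s' g'] hy]; apply/Z_rep.
exists (undup (s ++ s'), fun i => g i *+ count_mem i s - g' i *+ count_mem i s').
case: hx hy => [h1 /= h2] [h1' /= h2']; split=> [j|] /=.
  by apply: sgB (Csg j) _ _; apply: sgMn (Csg j) _.
have sub1 : {subset s <= undup (s ++ s')} by move=> j hj; rewrite mem_undup mem_cat hj.
have sub2 : {subset s' <= undup (s ++ s')} by move=> j hj; rewrite mem_undup mem_cat hj orbT.
by rewrite sumrB -(sum_count g (undup_uniq _) sub1) -(sum_count g' (undup_uniq _) sub2) -h2 -h2'.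
Qed.

Lemma C_Z j x : C j x -> Z x.
Proof.
move=> hx; apply/Z_rep; exists ([:: j], fun i => if i == j then x else 0); split=> [i|] /=.
  by case: eqP => [->//|_]; exact: sg0 (Csg i).
by rewrite big_seq1 eqxx.
Qed.

Section Ph.
Variable ph : I -> G -> G.
Hypothesis phD : forall i x y, C i x -> C i y -> ph i (x + y) = ph i x + ph i y.

Lemma phMn i x m : C i x -> ph i (x *+ m) = ph i x *+ m.
Proof.
move=> hx; elim: m => [|m IH].
  have h := phD (sg0 (Csg i)) (sg0 (Csg i)); rewrite addr0 in h.
  by rewrite !mulr0n; apply: (addrI (ph i 0)); rewrite addr0 -h.
by rewrite mulrS phD ?IH ?mulrS //; apply: sgMn (Csg i) _.
Qed.

Definition Phi z := let sg := choose_or (rep z) ([::], fun _ => 0) in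
  \sum_(i <- sg.1) ph i (sg.2 i).

Lemma Phi_rep z s g : rep z (s, g) -> Phi z = \sum_(i <- s) ph i (g i).
Proof.
move=> hr; rewrite /Phi; have := @choose_orP _ (rep z) ([::], fun _ => 0) (ex_intro _ _ hr).
case: (choose_or _ _) => s' g' hr' /=.
have sub1 : {subset s <= undup (s ++ s')} by move=> j hj; rewrite mem_undup mem_cat hj.
have sub2 : {subset s' <= undup (s ++ s')} by move=> j hj; rewrite mem_undup mem_cat hj orbT.
rewrite (sum_count (fun i => ph i (g i)) (undup_uniq _) sub1).
rewrite (sum_count (fun i => ph i (g' i)) (undup_uniq _) sub2).
apply: eq_big_seq => i hi.
by rewrite /= -(phMn _ (hr.1 i)) -(phMn _ (hr'.1 i)) (rep_cmp hr hr' hi).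
Qed.


Lemma PhiD z z' : Z z -> Z z' -> Phi (z + z') = Phi z + Phi z'.
Proof.
move=> /Z_rep [[s g] hz] /Z_rep [[s' g'] hz'].
have sub1 : {subset s <= undup (s ++ s')} by move=> j hj; rewrite mem_undup mem_cat hj.
have sub2 : {subset s' <= undup (s ++ s')} by move=> j hj; rewrite mem_undup mem_cat hj orbT.
have hr : rep (z + z') (undup (s ++ s'), fun i => g i *+ count_mem i s + g' i *+ count_mem i s').
  case: hz hz' => [h1 /= h2] [h1' /= h2']; split=> [j|] /=.
    by apply: sgD (Csg j) _ _; apply: sgMn (Csg j) _.
  by rewrite big_split /= -(sum_count g (undup_uniq _) sub1) -(sum_count g' (undup_uniq _) sub2) h2 h2'.
rewrite (Phi_rep hr) (Phi_rep hz) (Phi_rep hz').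
rewrite (sum_count (fun i => ph i (g i)) (undup_uniq _) sub1).
rewrite (sum_count (fun i => ph i (g' i)) (undup_uniq _) sub2) -big_split.
apply: eq_big_seq => i _ /=.
rewrite phD; first by rewrite (phMn _ (hz.1 i)) (phMn _ (hz'.1 i)).
  by apply: sgMn (Csg i) _; apply: hz.1.
by apply: sgMn (Csg i) _; apply: hz'.1.
Qed.

Variable sig : I -> I.
Variable i0 : I.
Hypothesis sig_inj : injective sig.
Hypothesis sig_i0 : forall i, sig i <> i0.
Hypothesis ph_C : forall i x, C i x -> C (sig i) (ph i x).
Hypothesis ph_inj : forall i x, C i x -> ph i x = 0 -> x = 0.

Lemma Phi_Z z : Z z -> Z (Phi z).
Proof.
move=> /Z_rep [[s g] hz]; rewrite (Phi_rep hz); apply: sgsum Z_sub _ => i.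
by apply: (@C_Z (sig i)); apply: ph_C; apply: hz.1.
Qed.

Lemma Phi_avoid z c : Z z -> C i0 c -> Phi z + c = 0 -> z = 0 /\ c = 0.
Proof.
move=> hzZ hc hsum; have [[s g] hz0] := (Z_rep z).1 hzZ; have hz := rep_norm hz0; rewrite (Phi_rep hz) in hsum.
set t := undup s in hz hsum; set g' := (fun i => _) in hz hsum.
pose tau j := choose_or (fun i => sig i = j) j.
have tauK i : tau (sig i) = i.
  by apply: sig_inj; apply: (@choose_orP _ (fun i' => sig i' = sig i)); exists i.
pose F j := if j == i0 then c else
  if excluded_middle_informative (exists i, sig i = j) then ph (tau j) (g' (tau j)) else 0.
have Fsig i : F (sig i) = ph i (g' i).
  rewrite /F; case: eqP => [/sig_i0//|_].
  destruct (excluded_middle_informative (exists i', sig i' = sig i)) as [h|h]; first by rewrite tauK.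
  by exfalso; apply: h; exists i.
have FC j : C j (F j).
  rewrite /F; case: eqP => [->//|_]; destruct (excluded_middle_informative (exists i', sig i' = j)) as [h|h]; last exact: sg0 (Csg j).
  have e : sig (tau j) = j by apply: (@choose_orP _ (fun i' => sig i' = j)).
  by rewrite -{1}e; apply: ph_C; apply: hz.1.
have ut : uniq (i0 :: map sig t).
  rewrite /= map_inj_uniq // undup_uniq andbT.
  by apply/mapP => -[i _ /esym/sig_i0].
have hF : \sum_(j <- i0 :: map sig t) F j = 0.
  rewrite big_cons big_map.
  have -> : F i0 = c by rewrite /F eqxx.
  under eq_bigr => i _ do rewrite Fsig.
  by rewrite addrC.
have h0 := hD.2.2 _ _ ut FC hF.
split; last by have := h0 i0 (mem_head _ _); rewrite /F eqxx.
rewrite hz.2 /= big1_seq // => i /= hi.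
apply: (ph_inj (hz.1 i)); rewrite -Fsig; apply: h0.
by rewrite inE map_f ?orbT.
Qed.
End Ph.
End Dsum.


Lemma shift (I : eqType) (C : I -> G -> Prop) Z (a : I -> nat -> G) (e : nat -> I) :
  internal_dsum C Z -> injective e -> (forall i x, C i x <-> span (a i) x) ->
  (forall i j, geq_ab (a i) (a j)) ->
  exists Ph : G -> G, (forall z z', Z z -> Z z' -> Ph (z + z') = Ph z + Ph z') /\
    (forall z, Z z -> Z (Ph z)) /\
    (forall z c, Z z -> C (e 0%N) c -> Ph z + c = 0 -> z = 0 /\ c = 0).
Proof.
move=> hD einj hC hE.
pose sig i := if excluded_middle_informative (exists k, e k = i)
  then e (choose_or (fun k => e k = i) 0%N).+1 else i.
have sigE k : sig (e k) = e k.+1.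
  rewrite /sig; destruct (excluded_middle_informative (exists k', e k' = e k)) as [h|h].
    by congr (e _.+1); apply: einj; apply: (@choose_orP _ (fun k' => e k' = e k)).
  by exfalso; apply: h; exists k.
have sigN i : ~ (exists k, e k = i) -> sig i = i.
  rewrite /sig => hn; destruct (excluded_middle_informative (exists k', e k' = i)) as [h|h] => //.
have sig_inj : injective sig.
  move=> i j.
  destruct (excluded_middle_informative (exists k, e k = i)) as [[k <-]|hi];
  destruct (excluded_middle_informative (exists k, e k = j)) as [[k' <-]|hj].
  - by rewrite !sigE => /einj [->].
  - by rewrite sigE (sigN _ hj) => eq; exfalso; apply: hj; exists k.+1.
  - by rewrite sigE (sigN _ hi) => eq; exfalso; apply: hi; exists k'.+1.
  - by rewrite (sigN _ hi) (sigN _ hj).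
have sig_i0 i : sig i <> e 0%N.
  destruct (excluded_middle_informative (exists k, e k = i)) as [[k <-]|hi].
    by rewrite sigE => /einj.
  by rewrite (sigN _ hi) => eq; apply: hi; exists 0%N.
pose ph i := phi (a i) (a (sig i)).
have phD i x y : C i x -> C i y -> ph i (x + y) = ph i x + ph i y.
  by move=> /hC hx /hC hy; apply: phiD.
have ph_C i x : C i x -> C (sig i) (ph i x) by move=> _; apply/hC; apply: phi_span.
have ph_inj i x : C i x -> ph i x = 0 -> x = 0 by move=> /hC hx; apply: phi_inj.
exists (Phi C ph); split; first by move=> z z'; apply: PhiD.
split; first by move=> z; apply: (Phi_Z hD phD ph_C).
by move=> z c; apply: (Phi_avoid hD phD sig_inj sig_i0 ph_C ph_inj).
Qed.


Lemma cyc_sub (x0 : G) N : x0 *+ N = 0 -> (0 < N)%N -> subgroup (fun x => exists i, x = x0 *+ i).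
Proof.
move=> hN N0; split; first by exists 0%N; rewrite mulr0n.
move=> _ _ [i ->] [j ->]; exists (i + N.-1 * j)%N; rewrite mulrnDr; congr (_ + _).
apply/eqP; rewrite eq_sym -addr_eq0 -mulrnDr -{2}[j]mul1n -mulnDl addn1 prednK //.
by rewrite mulrnA hN mul0rn.
Qed.

Definition tri (L Y Z : G -> Prop) := [/\ subgroup L, subgroup Y, subgroup Z,
  (forall g, exists l y z, [/\ L l, Y y, Z z & g = l + y + z]) &
  (forall l y z, L l -> Y y -> Z z -> l + y + z = 0 -> [/\ l = 0, y = 0 & z = 0])].

Lemma tri_of (X Y Z : G -> Prop) : direct_summand X -> internal_sum2 Y Z X -> exists L, tri L Y Z.
Proof.
move=> [L [hX [hL [hXL hXs]]]] [hY [hZ [hYZ hXi]]]; exists L; split=> //.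
  move=> g; have [x [l [hx [hl ->]]]] := (hXs g).1 I.
  have [y [z [hy [hz ->]]]] := (hXi x).1 hx.
  by exists l, y, z; split=> //; rewrite addrC addrA.
move=> l y z hl hy hz h0.
have hyz : y + z = 0.
  apply: hXL; first by apply/hXi; exists y, z.
  have -> : y + z = - l by apply/eqP; rewrite -addr_eq0 addrC addrA h0.
  exact: sgN.
have hl0 : l = 0 by move: h0; rewrite -addrA hyz addr0.
have hy0 : y = 0.
  apply: hYZ => //; have -> : y = - z by apply/eqP; rewrite -addr_eq0 hyz.
  exact: sgN.
by split=> //; move: hyz; rewrite hy0 add0r.
Qed.

Section Tri.
Variables L Y Z : G -> Prop.
Hypothesis tr : tri L Y Z.

Lemma tri_eq l y z l' y' z' : L l -> Y y -> Z z -> L l' -> Y y' -> Z z' ->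
  l + y + z = l' + y' + z' -> [/\ l = l', y = y' & z = z'].
Proof.
case: tr => hL hY hZ _ hu hl hy hz hl' hy' hz' e.
have := hu (l - l') (y - y') (z - z') (sgB hL hl hl') (sgB hY hy hy') (sgB hZ hz hz').
have -> : l - l' + (y - y') + (z - z') = (l + y + z) - (l' + y' + z').
  by rewrite !opprD !addrA; congr (_ + _); rewrite -!addrA; congr (_ + _);
     rewrite addrC -!addrA; congr (_ + _); rewrite addrC -!addrA; congr (_ + _); rewrite addrC.
by rewrite e subrr => /(_ erefl) [/eqP]; rewrite subr_eq0 => /eqP -> /eqP; rewrite subr_eq0 => /eqP -> /eqP;
  rewrite subr_eq0 => /eqP ->.
Qed.

Definition pdec g := choose_or (fun t : G * G * G => [/\ L t.1.1, Y t.1.2, Z t.2 & g = t.1.1 + t.1.2 + t.2]) (0, 0, 0).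
Definition pL g := (pdec g).1.1.
Definition pY g := (pdec g).1.2.
Definition pZ g := (pdec g).2.

Lemma pdecP g : [/\ L (pL g), Y (pY g), Z (pZ g) & g = pL g + pY g + pZ g].
Proof.
apply: (@choose_orP _ (fun t : G * G * G => [/\ L t.1.1, Y t.1.2, Z t.2 & g = t.1.1 + t.1.2 + t.2])).
by case: tr => _ _ _ hs _; have [l [y [z [hl hy hz e]]]] := hs g; exists (l, y, z).
Qed.

Lemma p_add g g' : [/\ pL (g + g') = pL g + pL g', pY (g + g') = pY g + pY g' & pZ (g + g') = pZ g + pZ g'].
Proof.
case: tr => hL hY hZ _ _.
have [h1 h2 h3 e] := pdecP g; have [h1' h2' h3' e'] := pdecP g'; have [h1'' h2'' h3'' e''] := pdecP (g + g').
apply: tri_eq => //; try by apply: sgD.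
have AC : forall a a' b b' c c' : G, a + a' + (b + b') + (c + c') = (a + b + c) + (a' + b' + c').
  by move=> a a' b b' c c'; rewrite (addrACA a a' b b') (addrACA (a + b)).
by rewrite AC -e -e' -e''.
Qed.


Lemma height p n (y g : G) c d : prime p -> Y y -> (forall x, Y x -> x *+ p ^ n.+1 = 0) ->
  y *+ p ^ n <> 0 -> y *+ p ^ n *+ c = y *+ p ^ n *+ d + g *+ p ^ n.+1 -> c = d %[mod p].
Proof.
move=> pp hy hYk hyn e.
case: tr => hL hY hZ hs hu.
have [l [y' [z' [hl hy' hz' eg]]]] := hs g.
have : (- (l *+ p ^ n.+1)) + (y *+ p ^ n *+ c - y *+ p ^ n *+ d) + (- (z' *+ p ^ n.+1)) = 0.
  rewrite e eg !mulrnDl (hYk _ hy') addr0.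
  have K : forall A C D : G, - A + (D + (A + C) - D) + - C = 0.
    by move=> A C D; rewrite (addrC D) addrK addrA addNr add0r subrr.
  exact: K.
move=> e0.
have H1 : L (- (l *+ p ^ n.+1)) by apply: sgN => //; apply: sgMn.
have H2 : Y (y *+ p ^ n *+ c - y *+ p ^ n *+ d) by apply: sgB => //; apply: sgMn => //; apply: sgMn.
have H3 : Z (- (z' *+ p ^ n.+1)) by apply: sgN => //; apply: sgMn.
have [_ /eqP ec _] := hu _ _ _ H1 H2 H3 e0; move: ec; rewrite subr_eq0 => /eqP ec.
have tp : y *+ p ^ n *+ p = 0 by rewrite -mulrnA -expnSr hYk.
apply/(mulrn_eqmod c d tp) => // w hw.
have := exact_pow_dvd (k := 0%N) pp (x := y *+ p ^ n) (u := w).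
by rewrite expn1 expn0 mulr1n => /(_ tp hyn hw).
Qed.

Lemma main p n (y v : G) (f : G -> G) : prime p -> p_group G p -> Y y ->
  (forall x, Y x -> x *+ p ^ n.+1 = 0) -> y *+ p ^ n <> 0 -> v *+ p ^ n.+1 *+ p <> 0 ->
  inj_hom_to_quotient (fun x => exists i, x = (y *+ p ^ n + v *+ p ^ n.+1) *+ i) f ->
  ~ semi_generalized_Bassian G.
Proof.
move=> pp pg hy hYk hyn hw [fhom finj] SGB.
set P := (p ^ n.+1)%N in hYk hw *.
set w := v *+ P in hw *.
set h := y *+ p ^ n + w.
set H := fun x => exists i, x = h *+ i.
have hH : subgroup H.
  have [k hk] := pg h; apply: (cyc_sub hk); by rewrite expn_gt0 prime_gt0.
have [K [[K' [hK [hK' [hKK' hKs]]]] hess]] := SGB H hH (ex_intro _ f (conj fhom finj)).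
have Kpart k k' : K k -> K' k' -> K (k + k') -> k' = 0.
  move=> hk hk' hkk; apply: hKK' => //.
  have -> : k' = (k + k') - k by rewrite addrC addKr.
  by apply: sgB.
have HK x : H x -> K x by apply: hess.1.
have hhK : K h by apply: HK; exists 1%N; rewrite mulr1n.
have [a [a' [ha [ha' ey]]]] := (hKs y).1 I.
have [e [e' [he [he' ev]]]] := (hKs v).1 I.
have hw_dec : w = e *+ P + e' *+ P by rewrite /w ev mulrnDl.
have k'0 : a' *+ p ^ n + e' *+ P = 0.
  apply: (Kpart (a *+ p ^ n + e *+ P)); first by apply: sgD => //; apply: sgMn.
    by apply: sgD => //; apply: sgMn.
  have -> : a *+ p ^ n + e *+ P + (a' *+ p ^ n + e' *+ P) = h.
    by rewrite /h hw_dec ey mulrnDl addrACA.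
  exact: hhK.
have aP : a' *+ P = 0.
  apply: (Kpart (a *+ P)); first by apply: sgMn.
    by apply: sgMn.
  by rewrite -mulrnDl -ey hYk //; apply: sg0.
set s := a *+ p ^ n.
have sP : s *+ p = 0.
  have : a *+ P = 0 by move: (hYk _ hy); rewrite ey mulrnDl aP addr0.
  by rewrite /s -mulrnA -expnSr.
have ha'n : a' *+ p ^ n = - (e' *+ P) by apply/eqP; rewrite -addr_eq0 k'0.
have es : s = y *+ p ^ n + e' *+ P by rewrite /s ey mulrnDl ha'n subrK.
have s0 : s <> 0.
  move=> s0; have : y *+ p ^ n *+ 1 = y *+ p ^ n *+ 0 + (- e') *+ P.
    by rewrite mulr1n mulr0n add0r mulNrn; apply/eqP; rewrite -addr_eq0 -es s0.
  move/(height pp hy hYk hyn); rewrite mod0n modn_small ?prime_gt1 //.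
have hS : subgroup (fun x => exists j, x = s *+ j) by apply: (cyc_sub sP); rewrite prime_gt0.
have SK x : (exists j, x = s *+ j) -> K x by move=> [j ->]; apply: sgMn => //; apply: sgMn.
have [x [[i ->] [[j hj] hx0]]] := hess.2 _ hS SK (ex_intro _ s (conj (ex_intro _ 1%N (esym (mulr1n s))) s0)).
have eqm : y *+ p ^ n *+ j = y *+ p ^ n *+ i + (v *+ i - e' *+ j) *+ P.
  rewrite /h es !mulrnDl in hj.
  have hj' : y *+ p ^ n *+ j = y *+ p ^ n *+ i + w *+ i - e' *+ P *+ j by rewrite hj addrK.
  rewrite hj' -addrA; congr (_ + _).
  by rewrite mulrnBl /w (mulrnAC v) (mulrnAC e').
have ji := height pp hy hYk hyn eqm.
have sij : s *+ j = s *+ i by rewrite (mulrn_mod _ sP) ji -(mulrn_mod _ sP).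
rewrite hj sij in hx0 *.
have npi : ~~ (p %| i)%N by apply/negP => pi; apply: hx0; apply: mulrn_dvd0 sP pi.
have hb : e *+ P *+ i = 0.
  have -> : e *+ P = h - s by apply/eqP; rewrite eq_sym subr_eq /h es hw_dec addrCA.
  by rewrite mulrnBl hj sij subrr.
have b0 := pg_coprime0 pp pg hb npi.
have hwK' : w = e' *+ P by rewrite hw_dec b0 add0r.
apply: hw; apply: hKK'.
  have -> : w *+ p = h *+ p.
    by rewrite /h mulrnDl -(mulrnA y) -expnSr -/P hYk // add0r.
  by apply: HK; exists p.
rewrite hwK'; exact: (sgMn p hK' (sgMn P hK' he')).
Qed.
End Tri.

End Aux.

Section H2.
Local Open Scope ring_scope.
Lemma addAC6 (G : zmodType) (a a' b b' c c' : G) : a + a' + (b + b') + (c + c') = (a + b + c) + (a' + b' + c').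
Proof. by rewrite (addrACA a a' b b') (addrACA (a + b)). Qed.

Lemma span_cyc (G : zmodType) (C : G -> Prop) (c : G) : (forall x, C x <-> exists k, x = c *+ k) ->
  forall x, C x <-> span (fun _ => c) x.
Proof. by move=> h x; rewrite h; split=> [[k ->]|[_ [k ->]]]; [exists 0%N, k | exists k]. Qed.


Lemma case_a (G : zmodType) p n (L Y Z : G -> Prop) (I : eqType) (C : I -> G -> Prop) (e : nat -> I)
  (Ph : G -> G) (y v : G) :
  prime p -> p_group G p -> tri L Y Z -> internal_dsum C Z ->
  Y y -> (forall x, Y x -> x *+ p ^ n.+1 = 0) -> y *+ p ^ n <> 0 ->
  C (e 0%N) v -> v *+ p ^ n.+1 *+ p <> 0 ->
  (forall z z', Z z -> Z z' -> Ph (z + z') = Ph z + Ph z') ->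
  (forall z, Z z -> Z (Ph z)) ->
  (forall z c, Z z -> C (e 0%N) c -> Ph z + c = 0 -> z = 0 /\ c = 0) ->
  ~ semi_generalized_Bassian G.
Proof.
move=> pp pg tr hD hy hYk hyn hv hw PhD PhZ Phav.
have [hLs hYs hZs _ _] := tr.
pose f g := pL L Y Z g + pY L Y Z g + Ph (pZ L Y Z g).
apply: (main tr (f := f) pp pg hy hYk hyn hw); split.
  move=> x x'; exists 0%N; rewrite mulr0n; apply/eqP; rewrite subr_eq0; apply/eqP.
  have [_ _ hzx _] := pdecP tr x; have [_ _ hzx' _] := pdecP tr x'.
  by rewrite /f; have [-> -> ->] := p_add tr x x'; rewrite PhD // addAC6.
move=> g [i hi].
have [hl hy' hz eg] := pdecP tr g.
set w := v *+ p ^ n.+1 in hw hi.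
have hCw : C (e 0%N) (w *+ i) by apply: (sgMn i (hD.1 _)); apply: (sgMn _ (hD.1 _)).
have hZw : Z (w *+ i) := C_Z hD hCw.
have hYi : Y (y *+ p ^ n *+ i) by apply: (sgMn i hYs); apply: (sgMn _ hYs).
have eqf : pL L Y Z g + pY L Y Z g + Ph (pZ L Y Z g) = 0 + y *+ p ^ n *+ i + w *+ i.
  by rewrite add0r -mulrnDl -hi.
have [l0 yeq zeq] := tri_eq tr hl hy' (PhZ _ hz) (sg0 hLs) hYi hZw eqf.
have [hz0 hw0] : pZ L Y Z g = 0 /\ - (w *+ i) = 0.
  by apply: Phav => //; [exact: sgN (hD.1 _) hCw | rewrite zeq subrr].
move/eqP: hw0; rewrite oppr_eq0 => /eqP hwi.
have pi : (p %| i)%N.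
  apply/negPn/negP => npi; apply: hw; rewrite (pg_coprime0 pp pg hwi npi) mul0rn //.
have yi0 : y *+ p ^ n *+ i = 0.
  rewrite -mulrnA; apply: (mulrn_dvd0 (hYk y hy)).
  by rewrite expnSr dvdn_pmul2l // expn_gt0 prime_gt0.
by rewrite eg l0 yeq hz0 yi0 !addr0.
Qed.

Lemma case_b (G : zmodType) p n (L Y Z : G -> Prop) (I : eqType) (C : I -> G -> Prop) (e : nat -> I)
  (Ph : G -> G) (y : G) (c : nat -> G) :
  prime p -> p_group G p -> tri L Y Z -> internal_dsum C Y ->
  C (e 0%N) y -> (forall x, Y x -> x *+ p ^ n.+1 = 0) ->
  (forall u, y *+ u = 0 -> (p ^ n.+1 %| u)%N) -> y *+ p ^ n <> 0 ->
  c 0%N = 0 -> c 1%N <> 0 -> (forall k, c k.+1 *+ p = c k) ->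
  (forall x, Z x <-> exists k j, x = c k *+ j) ->
  (forall z z', Y z -> Y z' -> Ph (z + z') = Ph z + Ph z') ->
  (forall z, Y z -> Y (Ph z)) ->
  (forall z c, Y z -> C (e 0%N) c -> Ph z + c = 0 -> z = 0 /\ c = 0) ->
  ~ semi_generalized_Bassian G.
Proof.
move=> pp pg tr hD hy0 hYk hex hyn c0 c1 cS hZi PhD PhY Phav.
have [hLs hYs hZs _ _] := tr.
have hy : Y y := C_Z hD hy0.
have hv : c n.+3 *+ p ^ n.+1 = c 2%N by have := pr_down cS 2 n.+1; rewrite add2n.
have hw : c n.+3 *+ p ^ n.+1 *+ p <> 0 by rewrite hv cS.
pose psi z := choose_or (fun r => Z r /\ r *+ p = z) 0.
have psiP z : Z z -> Z (psi z) /\ psi z *+ p = z.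
  move=> /hZi [k [j ->]]; apply: (@choose_orP _ (fun r => Z r /\ r *+ p = c k *+ j)).
  exists (c k.+1 *+ j); split; first by apply/hZi; exists k.+1, j.
  by rewrite mulrnAC cS.
have hp : (y *+ p ^ n + c n.+3 *+ p ^ n.+1) *+ p = c 1%N.
  by rewrite mulrnDl -mulrnA -expnSr (hYk _ hy) add0r hv cS.
pose f g := pL L Y Z g + Ph (pY L Y Z g) + psi (pZ L Y Z g).
apply: (main tr (f := f) pp pg hy hYk hyn hw); split.
  move=> x x'.
  have [_ hyx hzx _] := pdecP tr x; have [_ hyx' hzx' _] := pdecP tr x'.
  set z := pZ L Y Z x; set z' := pZ L Y Z x'.
  have hZd : Z (psi (z + z') - (psi z + psi z')).
    apply: (sgB hZs); first by apply: (psiP _ (sgD hZs hzx hzx')).1.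
    by apply: (sgD hZs); [exact: (psiP _ hzx).1 | exact: (psiP _ hzx').1].
  have dp : (psi (z + z') - (psi z + psi z')) *+ p = 0.
    rewrite mulrnBl mulrnDl (psiP _ (sgD hZs hzx hzx')).2 (psiP _ hzx).2 (psiP _ hzx').2.
    exact: subrr.
  have [q dq] : exists q, psi (z + z') - (psi z + psi z') = c 1%N *+ q.
    by move: hZd dp => /hZi [k [j ->]]; apply: pr_killed.
  have key : f (x + x') - (f x + f x') = psi (z + z') - (psi z + psi z').
    rewrite /f; have [-> -> ->] := p_add tr x x'; rewrite PhD // -/z -/z'.
    have K : forall a a' b b' c c' t : G, a + a' + (b + b') + t - ((a + b + c) + (a' + b' + c')) = t - (c + c').
      move=> a a' b b' c2 c2' t; rewrite -addAC6 opprD addrACA subrr add0r //.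
    exact: K.
  by exists (p * q)%N; rewrite key dq mulrnA hp.
move=> g [i hi].
have [hl hy' hz eg] := pdecP tr g.
have hYi : Y (y *+ p ^ n *+ i) by apply: (sgMn i hYs); apply: (sgMn _ hYs).
have hZw : Z (c 2%N *+ i) by apply/hZi; exists 2%N, i.
have eqf : pL L Y Z g + Ph (pY L Y Z g) + psi (pZ L Y Z g) = 0 + y *+ p ^ n *+ i + c 2%N *+ i.
  by rewrite add0r -mulrnDl -hv -hi.
have [l0 yeq zeq] := tri_eq tr hl (PhY _ hy') (psiP _ hz).1 (sg0 hLs) hYi hZw eqf.
have hCi : C (e 0%N) (- (y *+ p ^ n *+ i)).
  by apply: (sgN (hD.1 _)); apply: (sgMn i (hD.1 _)); apply: (sgMn _ (hD.1 _)).
have [hy0' hyi0] : pY L Y Z g = 0 /\ - (y *+ p ^ n *+ i) = 0.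
  by apply: Phav => //; rewrite yeq subrr.
move/eqP: hyi0; rewrite oppr_eq0 -mulrnA => /eqP /hex.
rewrite expnSr dvdn_pmul2l ?expn_gt0 ?prime_gt0 // => /dvdnP [q iq].
have hz0 : pZ L Y Z g = 0.
  by rewrite -(psiP _ hz).2 zeq iq mulrnA mulrnAC cS mulrnAC cS c0 mul0rn.
by rewrite eg l0 hy0' hz0 !addr0.
Qed.

Lemma gens_cyc (G : zmodType) (I : eqType) (C : I -> G -> Prop) N :
  (forall i, cyclic_of_order (C i) N) -> exists a : I -> nat -> G,
  [/\ (forall i x, C i x <-> span (a i) x), (forall i j, geq_ab (a i) (a j)) &
      (forall i k, elt_order (a i k) N)].
Proof.
move=> hC.
pose gen i := choose_or (fun c => elt_order c N /\ forall x, C i x <-> exists k, x = c *+ k) 0.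
have genP i : elt_order (gen i) N /\ forall x, C i x <-> exists k, x = gen i *+ k.
  exact: (@choose_orP _ (fun c => elt_order c N /\ forall x, C i x <-> exists k, x = c *+ k) 0 (hC i)).
exists (fun i _ => gen i); split.
- by move=> i; apply: span_cyc; exact: (genP i).2.
- by move=> i j; apply: geq_cyc; [exact: (genP i).1 | exact: (genP j).1].
- by move=> i _; exact: (genP i).1.
Qed.

Lemma gens_pr (G : zmodType) p (I : eqType) (C : I -> G -> Prop) : prime p ->
  (forall i, pruefer p (C i)) -> exists a : I -> nat -> G,
  [/\ (forall i x, C i x <-> span (a i) x), (forall i j, geq_ab (a i) (a j)) &
      (forall i, [/\ a i 0%N = 0, a i 1%N <> 0 & forall k, a i k.+1 *+ p = a i k])].
Proof.
move=> pp hC.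
pose P i (c : nat -> G) := [/\ c 0%N = 0, c 1%N <> 0, (forall k, c k.+1 *+ p = c k) &
  forall x, C i x <-> exists k j, x = c k *+ j].
pose gen i := choose_or (P i) (fun _ => 0).
have genP i : P i (gen i).
  apply: choose_orP; have [c [c0 [c1 [cS hc]]]] := hC i; by exists c; split.
exists gen; split.
- by move=> i x; have [_ _ _ ->] := genP i.
- move=> i j; have [c0 c1 cS _] := genP i; have [d0 d1 dS _] := genP j.
  exact: geq_pr pp c0 c1 cS d0 d1 dS.
- by move=> i; have [c0 c1 cS _] := genP i.
Qed.
End H2.

Unset Implicit Arguments.

Theorem lemma2p10 (p : nat) (G : zmodType) (X Y Z : G -> Prop) (n : nat) :
  prime p -> p_group G p -> (0 < n)%N ->
  direct_summand X -> internal_sum2 Y Z X ->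
  ( (* case (a) *)
    (cyclic_of_order Y (p ^ n) /\
     ((exists m : nat, (n + 2 <= m)%N /\
         inf_dsum_of (fun C => cyclic_of_order C (p ^ m)) Z) \/
      inf_dsum_of (pruefer p) Z))
  \/ (* case (b) *)
    (inf_dsum_of (fun C => cyclic_of_order C (p ^ n)) Y /\ pruefer p Z) ) ->
  ~ semi_generalized_Bassian G.
Proof.
move=> pp pg n0 hX hYZX hcase.
have [L tr] := tri_of hX hYZX.
have [hLs hYs hZs _ _] := tr.
case: n n0 hcase => // n _ hcase.
case: hcase => [[[y [hyo hYi]] hZc] | [[I [C [[e einj] [hD hC]]]] [c [c0 [c1 [cS hZi]]]]]].
  have hy : Y y by apply/hYi; exists 1%N; rewrite mulr1n.
  have hYk : forall x, Y x -> (x *+ (p ^ n.+1)%N = 0)%R.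
    by move=> x /hYi [k ->]; rewrite mulrnAC hyo.2.1 mul0rn.
  have hyn : (y *+ (p ^ n)%N <> 0)%R.
    by apply: hyo.2.2; rewrite expn_gt0 prime_gt0 //= ltn_exp2l ?prime_gt1.
  case: hZc => [[m [hm [I [C [[e einj] [hD hC]]]]]] | [I [C [[e einj] [hD hC]]]]].
    have [a [ha hg ho]] := gens_cyc hC.
    have [Ph [PhD [PhZ Phav]]] := shift hD einj ha hg.
    apply: (case_a (v := a (e 0%N) 0%N) pp pg tr hD hy hYk hyn _ _ PhD PhZ Phav).
      by apply/ha; exists 0%N, 1%N; rewrite mulr1n.
    rewrite -mulrnA -expnSr; apply: (ho _ _).2.2.
    rewrite expn_gt0 prime_gt0 //= ltn_exp2l ?prime_gt1 //.
    by apply: leq_trans hm; rewrite addn2.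
  have [a [ha hg ho]] := gens_pr pp hC.
  have [Ph [PhD [PhZ Phav]]] := shift hD einj ha hg.
  have [a0 a1 aS] := ho (e 0%N).
  apply: (case_a (v := a (e 0%N) n.+3) pp pg tr hD hy hYk hyn _ _ PhD PhZ Phav).
    by apply/ha; exists n.+3, 1%N; rewrite mulr1n.
  by have := pr_down aS 2 n.+1; rewrite add2n => ->; rewrite aS.
have [a [ha hg ho]] := gens_cyc hC.
have [Ph [PhD [PhY Phav]]] := shift hD einj ha hg.
have hYk : forall x, Y x -> (x *+ (p ^ n.+1)%N = 0)%R.
  move=> x /(hD.2.1 x) [s [g [hg' ->]]]; rewrite -sumrMnl big1 // => i _.
  by have /ha [k [j ->]] := hg' i; rewrite mulrnAC (ho _ _).2.1 mul0rn.
apply: (case_b (y := a (e 0%N) 0%N) pp pg tr hD _ hYk _ _ c0 c1 cS hZi PhD PhY Phav).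
- by apply/ha; exists 0%N, 1%N; rewrite mulr1n.
- by move=> u; apply: elt_order_dvd; apply: ho.
- by apply: (ho _ _).2.2; rewrite expn_gt0 prime_gt0 //= ltn_exp2l ?prime_gt1.
Qed.
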